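(* $\mathbf S(\mathbf{pAND}\cup\mathbf{11tAND}\cup\mathbf{11pOR}\cup\mathbf{tOR})\supsetneq\mathbf S(\mathbf{pAND}\cup\mathbf{11tAND}\cup\mathbf{tOR})$; in particular, there is a one-input one-output pOR net that does not belong to $\mathbf S(\mathbf{pAND}\cup\mathbf{11tAND}\cup\mathbf{tOR})$.
   Context: Petri nets: $(P,T,F)$ with finite disjoint places $P$, transitions $T$, flow edges $F\subseteq(P\times T)\cup(T\times P)$; $\bullet x=\{y\mid(y,x)\in F\}$, $x\bullet=\{y\mid(x,y)\in F\}$. Workflow nets. A pWF net is $(P,T,F,I,O)$ with $(P,T,F)$ a Petri net, $I,O\subseteq P$ non-empty, every node reachable by a directed path from some node of $I$, and some node of $O$ reachable from every node. A tWF net is the same with $I,O$ non-empty subsets of $T$. Input nodes may have incoming edges and output nodes outgoing edges. A WF net is a pWF or tWF net; it is one-input (one-output) if $|I|=1$ ($|O|=1$). Substitution. Let $N=(P,T,F,I,O)$ and $M=(P',T',F',I',O')$ be WF nets with disjoint node sets. If $p\in P$ and $M$ is a pWF net, $N\otimes_p M$ is obtained from $N$ by deleting $p$ and all edges incident to $p$, adding all nodes and edges of $M$, adding an edge $(t,p')$ for each $t\in\bullet_N p$ and each $p'\in I'$, and an edge $(p',t)$ for each $p'\in O'$ and each $t\in p\bullet_N$; its input set is $(I\setminus\{p\})\cup I'$ if $p\in I$ and $I$ otherwise, and its output set is $(O\setminus\{p\})\cup O'$ if $p\in O$ and $O$ otherwise. If $t\in T$ and $M$ is a tWF net, $N\otimes_t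 M$ is defined analogously: delete $t$ and its edges, add $M$, add $(q,t')$ for each $q\in\bullet_N t$, $t'\in I'$, and $(t',q)$ for each $t'\in O'$, $q\in t\bullet_N$, with input/output sets updated in the same way. The substitution closure $\mathbf S(C)$ of a class $C$ of WF nets is the smallest superclass of $C$ such that whenever $N,M\in\mathbf S(C)$ are disjoint, $N\otimes_p M\in\mathbf S(C)$ for every place $p$ of $N$ if $M$ is a pWF net, and $N\otimes_t M\in\mathbf S(C)$ for every transition $t$ of $N$ if $M$ is a tWF net. AND and OR nets. An AND net is an acyclic WF net $(P,T,F,I,O)$ such that for every place $p$: (1) either $p\in I$ and $|\bullet p|=0$, or $p\notin I$ and $|\bullet p|=1$; and (2) either $p\in O$ and $|p\bullet|=0$, or $p\notin O$ and $|p\bullet|=1$. An OR net is a (possibly cyclic) WF net such that for every transition $t$: (1) either $t\in I$ and $|\bullet t|=0$, or $t\notin I$ and $|\bullet t|=1$; and (2) either $t\in O$ and $|t\bullet|=0$, or $t\notin O$ and $|t\bullet|=1$. A pAND (tAND, pOR, tOR) net is an AND (AND, OR, OR) net that is a pWF (tWF, pWF, tWF) net. $\mathbf{pAND}$ is the class of pAND nets, $\mathbf{11tAND}$ the class of one-input one-output tAND nets, $\mathbf{11pOR}$ the class of one-input one-output pOR nets, and $\mathbf{tOR}$ the class of tOR nets. *)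

(* Defs.v *)
(* Nodes of nets are natural numbers; a net is given by
   characteristic functions, so Leibniz equality of nets (with functional
   extensionality) is equality of the underlying sets. *)
From Stdlib Require Import Arith Relations Bool.
Open Scope bool_scope.

Record net := Net {
  plc : nat -> bool;
  trn : nat -> bool;
  flw : nat -> nat -> bool;
  inp : nat -> bool;
  out : nat -> bool
}.

Definition node (N : net) (x : nat) : bool := plc N x || trn N x.
Definition edge (N : net) (x y : nat) : Prop := flw N x y = true.

Definition petri_ok (N : net) : Prop :=
  (forall x, ~ (plc N x = true /\ trn N x = true)) /\
  (exists n, forall x, node N x = true -> x < n) /\
  (forall x y, flw N x y = true ->
     (plc N x = true /\ trn N y = true) \/ (trn N x = true /\ plc N y = true)).

Definition reach (N : net) : nat -> nat -> Prop := clos_refl_trans nat (edge N).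

Definition wf_common (N : net) : Prop :=
  petri_ok N /\
  (exists x, inp N x = true) /\ (exists x, out N x = true) /\
  (forall x, node N x = true -> exists i, inp N i = true /\ reach N i x) /\
  (forall x, node N x = true -> exists o, out N o = true /\ reach N x o).

Definition pWF (N : net) : Prop :=
  wf_common N /\
  (forall x, inp N x = true -> plc N x = true) /\
  (forall x, out N x = true -> plc N x = true).

Definition tWF (N : net) : Prop :=
  wf_common N /\
  (forall x, inp N x = true -> trn N x = true) /\
  (forall x, out N x = true -> trn N x = true).

Definition WF (N : net) : Prop := pWF N \/ tWF N.

Definition one_input (N : net) : Prop :=
  exists i, inp N i = true /\ forall j, inp N j = true -> j = i.
Definition one_output (N : net) : Prop :=
  exists o, out N o = true /\ forall j, out N j = true -> j = o.

Definition acyclic (N : net) : Prop := forall x, ~ clos_trans nat (edge N) x x.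

Definition no_pre (N : net) x : Prop := forall y, flw N y x = false.
Definition one_pre (N : net) x : Prop :=
  exists y, flw N y x = true /\ forall z, flw N z x = true -> z = y.
Definition no_post (N : net) x : Prop := forall y, flw N x y = false.
Definition one_post (N : net) x : Prop :=
  exists y, flw N x y = true /\ forall z, flw N x z = true -> z = y.

Definition node_cond (N : net) x : Prop :=
  ((inp N x = true /\ no_pre N x) \/ (inp N x = false /\ one_pre N x)) /\
  ((out N x = true /\ no_post N x) \/ (out N x = false /\ one_post N x)).

Definition AND_net (N : net) : Prop :=
  WF N /\ acyclic N /\ forall p, plc N p = true -> node_cond N p.

Definition OR_net (N : net) : Prop :=
  WF N /\ forall t, trn N t = true -> node_cond N t.

Definition pAND (N : net) : Prop := AND_net N /\ pWF N.
Definition tAND11 (N : net) : Prop := AND_net N /\ tWF N /\ one_input N /\ one_output N.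
Definition pOR11 (N : net) : Prop := OR_net N /\ pWF N /\ one_input N /\ one_output N.
Definition tOR (N : net) : Prop := OR_net N /\ tWF N.

Definition disjoint_nets (N M : net) : Prop :=
  forall x, ~ (node N x = true /\ node M x = true).

(* N (x) _v M : delete node v of N, add M, connect pre(v) to I_M and O_M to post(v). *)
Definition subst (N : net) (v : nat) (M : net) : net :=
  let keep x := negb (Nat.eqb x v) in
  {| plc := fun x => (plc N x && keep x) || plc M x;
     trn := fun x => (trn N x && keep x) || trn M x;
     flw := fun x y => (flw N x y && keep x && keep y) || flw M x y
                       || (flw N x v && inp M y) || (out M x && flw N v y);
     inp := if inp N v then (fun x => (inp N x && keep x) || inp M x) else inp N;
     out := if out N v then (fun x => (out N x && keep x) || out M x) else out N |}.

Inductive SC (C : net -> Prop) : net -> Prop :=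
| SC_base : forall N, C N -> SC C N
| SC_place : forall N M p, SC C N -> SC C M -> disjoint_nets N M ->
    pWF M -> plc N p = true -> SC C (subst N p M)
| SC_trans : forall N M t, SC C N -> SC C M -> disjoint_nets N M ->
    tWF M -> trn N t = true -> SC C (subst N t M).

Definition class_big (N : net) : Prop := pAND N \/ tAND11 N \/ pOR11 N \/ tOR N.
Definition class_small (N : net) : Prop := pAND N \/ tAND11 N \/ tOR N.

(* Main.v *)
Require Import Defs.
From Stdlib Require Import Arith Relations Bool Lia.

Definition Inv (N : net) : Prop :=
  (forall x, ~ (plc N x = true /\ trn N x = true)) /\
  (forall x y, flw N x y = true ->
     (plc N x = true /\ trn N y = true) \/ (trn N x = true /\ plc N y = true)) /\
  (forall x, inp N x = true -> node N x = true) /\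
  (forall x, inp N x = true -> plc N x = true -> no_pre N x).

Lemma node_true N x : node N x = true <-> plc N x = true \/ trn N x = true.
Proof. unfold node. apply orb_true_iff. Qed.

Lemma WF_inv_abc N : WF N -> (forall x, ~ (plc N x = true /\ trn N x = true)) /\
  (forall x y, flw N x y = true ->
     (plc N x = true /\ trn N y = true) \/ (trn N x = true /\ plc N y = true)) /\
  (forall x, inp N x = true -> node N x = true).
Proof.
  intros [[[[A [_ B]] _] Hp] | [[[A [_ B]] _] Hp]]; repeat split; auto;
  intros x Hx; apply node_true; [left|right]; apply (proj1 Hp); auto.
Qed.

Lemma base_inv N : class_small N -> Inv N.
Proof.
  intros H.
  assert (HW : WF N) by (destruct H as [[[W _] _]|[[[W _] _]|[[W _] _]]]; auto).
  destruct (WF_inv_abc N HW) as [A [B C]].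
  repeat split; auto.
  intros x Hi Hp.
  destruct H as [[[_ [_ Hc]] _]|[[_ [[_ [Ht _]] _]]|[_ [_ [Ht _]]]]].
  - destruct (Hc x Hp) as [[[_ H]|[H _]] _]; auto; congruence.
  - exfalso; apply (A x); auto.
  - exfalso; apply (A x); auto.
Qed.

Lemma subst_inv N M v : Inv N -> Inv M -> disjoint_nets N M ->
  (pWF M /\ plc N v = true) \/ (tWF M /\ trn N v = true) -> Inv (subst N v M).
Proof.
  intros [NA [NB [NC ND]]] [MA [MB [MC MD]]] Dj Hk.
  assert (HWM : WF M) by (destruct Hk as [[H _]|[H _]]; [left|right]; auto).
  assert (Dx : forall x, node N x = true -> node M x = false).
  { intros x H1. destruct (node M x) eqn:E; auto. exfalso; apply (Dj x); auto. }
  assert (DpN : forall x, plc N x = true -> node M x = false).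
  { intros x H; apply Dx; apply node_true; auto. }
  assert (DtN : forall x, trn N x = true -> node M x = false).
  { intros x H; apply Dx; apply node_true; auto. }
  assert (DM : forall x, node M x = false -> plc M x = false /\ trn M x = false).
  { intros x H; unfold node in H; apply orb_false_iff in H; auto. }
  assert (DpM : forall x, plc M x = true -> node N x = false).
  { intros x H. destruct (node N x) eqn:E; auto. exfalso; apply (Dj x); split; auto; apply node_true; auto. }
  assert (DtM : forall x, trn M x = true -> node N x = false).
  { intros x H. destruct (node N x) eqn:E; auto. exfalso; apply (Dj x); split; auto; apply node_true; auto. }
  assert (DN : forall x, node N x = false -> plc N x = false /\ trn N x = false).
  { intros x H; unfold node in H; apply orb_false_iff in H; auto. }
  assert (NBn : forall x y, flw N x y = true -> node N x = true /\ node N y = true).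
  { intros x y H; destruct (NB x y H) as [[? ?]|[? ?]]; split; apply node_true; auto. }
  assert (MBn : forall x y, flw M x y = true -> node M x = true /\ node M y = true).
  { intros x y H; destruct (MB x y H) as [[? ?]|[? ?]]; split; apply node_true; auto. }
  assert (NvNode : node N v = true) by (apply node_true; destruct Hk as [[_ H]|[_ H]]; auto).
  unfold Inv, subst, no_pre; simpl.
  split; [|split; [|split]].
  -
    intros x [H1 H2].
    apply orb_true_iff in H1; apply orb_true_iff in H2.
    destruct H1 as [H1|H1]; destruct H2 as [H2|H2].
    + apply andb_true_iff in H1; apply andb_true_iff in H2. apply (NA x); tauto.
    + apply andb_true_iff in H1. pose proof (DM x (DpN x (proj1 H1))). destruct H; congruence.
    + apply andb_true_iff in H2. pose proof (DM x (DtN x (proj1 H2))). destruct H; congruence.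
    + apply (MA x); auto.
  -
    intros x y H.
    repeat rewrite orb_true_iff in H. repeat rewrite andb_true_iff in H.
    repeat rewrite orb_true_iff. repeat rewrite andb_true_iff.
    destruct H as [[[H|H]|H]|H].
    + destruct H as [[H1 H2] H3]. destruct (NB x y H1); tauto.
    + destruct (MB x y H); tauto.
    + destruct H as [H1 H2].
      destruct Hk as [[[[[_ _] _] [Hi _]] Hv]|[[[[_ _] _] [Hi _]] Hv]].
      * destruct (NB x v H1) as [[_ Ht]|[Ht _]]. { exfalso; apply (NA v); auto. }
        right. split; [left; split; auto|right; auto].
        apply negb_true_iff. apply Nat.eqb_neq. intro; subst; apply (NA v); auto.
      * destruct (NB x v H1) as [[Hp _]|[_ Hp]]. 2:{ exfalso; apply (NA v); auto. }
        left. split; [left; split; auto|right; auto].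
        apply negb_true_iff. apply Nat.eqb_neq. intro; subst; apply (NA v); auto.
    + destruct H as [H1 H2].
      destruct Hk as [[[[[_ _] _] [_ Ho]] Hv]|[[[[_ _] _] [_ Ho]] Hv]].
      * destruct (NB v y H2) as [[_ Ht]|[Ht _]]. 2:{ exfalso; apply (NA v); auto. }
        left. split; [right; auto|left; split; auto].
        apply negb_true_iff. apply Nat.eqb_neq. intro; subst; apply (NA v); auto.
      * destruct (NB v y H2) as [[Hp _]|[_ Hp]]. { exfalso; apply (NA v); auto. }
        right. split; [right; auto|left; split; auto].
        apply negb_true_iff. apply Nat.eqb_neq. intro; subst; apply (NA v); auto.
  -
    intros x H. unfold node; simpl.
    destruct (inp N v) eqn:Ev.
    + apply orb_true_iff in H. destruct H as [H|H].
      * apply andb_true_iff in H. destruct H as [H1 H2]. rewrite H2.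
        destruct (proj1 (node_true _ _) (NC x H1)) as [P|P]; rewrite P; simpl; auto.
        rewrite orb_true_r. auto.
      * destruct (proj1 (node_true _ _) (MC x H)) as [P|P]; rewrite P; rewrite ?orb_true_r; auto.
    + assert (x <> v) by (intro; subst; congruence).
      apply Nat.eqb_neq in H0. rewrite H0; simpl.
      destruct (proj1 (node_true _ _) (NC x H)) as [P|P]; rewrite P; simpl; rewrite ?orb_true_r; auto.
  -
    assert (Nside : forall x y, inp N x = true -> (x =? v) = false ->
      (plc N x && negb (x =? v) || plc M x) = true ->
      (flw N y x && negb (y =? v) && negb (x =? v) || flw M y x || flw N y v && inp M x
       || out M y && flw N v x) = false).
    { intros x y Hi Hxv Hp.
      assert (Hn : node M x = false) by (apply Dx; auto).
      assert (HpN : plc N x = true).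
      { apply orb_true_iff in Hp. destruct Hp as [Hp|Hp].
        - apply andb_true_iff in Hp; tauto.
        - pose proof (DM x Hn); destruct H; congruence. }
      pose proof (ND x Hi HpN) as Hnp. unfold no_pre in Hnp.
      assert (E1 : flw M y x = false).
      { destruct (flw M y x) eqn:E; auto. destruct (MBn y x E); congruence. }
      assert (E2 : inp M x = false).
      { destruct (inp M x) eqn:E; auto. pose proof (MC x E); congruence. }
      rewrite Hnp, Hnp, E1, E2. destruct (flw N y v), (out M y); reflexivity. }
    intros x Hi Hp y.
    destruct (inp N v) eqn:Ev.
    + apply orb_true_iff in Hi. destruct Hi as [Hi|Hi].
      * apply andb_true_iff in Hi. destruct Hi as [Hi Hxv].
        apply negb_true_iff in Hxv. apply Nside; auto.
      * assert (HnM : node M x = true) by auto.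
        assert (HnN : node N x = false).
        { destruct (node N x) eqn:E; auto. pose proof (Dx x E); congruence. }
        destruct (DN x HnN) as [Pn Tn].
        assert (HpM : plc M x = true).
        { apply orb_true_iff in Hp. destruct Hp as [Hp|Hp]; auto.
          apply andb_true_iff in Hp. destruct Hp; congruence. }
        assert (E1 : forall z, flw N z x = false).
        { intro z. destruct (flw N z x) eqn:E; auto. destruct (NBn z x E); congruence. }
        assert (E3 : flw N y v = false).
        { destruct Hk as [[_ Hv]|[[_ [Ht _]] _]].
          - apply (ND v Ev Hv).
          - exfalso; apply (MA x); auto. }
        rewrite (MD x Hi HpM y), E1, E1, E3. destruct (out M y); reflexivity.
    + assert (Hxv : (x =? v) = false).
      { apply Nat.eqb_neq. intro; subst; congruence. }
      apply Nside; auto.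
Qed.

Lemma SC_inv N : SC class_small N -> Inv N.
Proof.
  induction 1.
  - apply base_inv; auto.
  - apply subst_inv; auto.
  - apply subst_inv; auto.
Qed.

Lemma SC_mono N : SC class_small N -> SC class_big N.
Proof.
  induction 1.
  - apply SC_base. destruct H as [H|[H|H]]; unfold class_big; tauto.
  - apply SC_place; auto.
  - apply SC_trans; auto.
Qed.

Definition X : net := {|
  plc := fun x => (x =? 0) || (x =? 2);
  trn := fun x => (x =? 1) || (x =? 3);
  flw := fun x y => match x, y with
                    | 0, 1 | 1, 2 | 2, 3 | 3, 0 => true
                    | _, _ => false end;
  inp := fun x => x =? 0;
  out := fun x => x =? 2 |}.

Lemma X_reach : forall x y, x < 4 -> y < 4 -> reach X x y.
Proof.
  assert (Hs : forall x, x < 4 -> reach X x (match x with 0 => 1 | 1 => 2 | 2 => 3 | _ => 0 end)).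
  { intros x Hx. apply rt_step. destruct x as [|[|[|[|x]]]]; try reflexivity; lia. }
  intros x y Hx Hy.
  destruct x as [|[|[|[|x]]]]; try lia; destruct y as [|[|[|[|y]]]]; try lia;
  repeat (first [apply rt_refl | eapply rt_trans; [apply Hs; lia | simpl]]).
Qed.

Lemma X_node x : node X x = true -> x < 4.
Proof. unfold node; simpl. destruct x as [|[|[|[|x]]]]; simpl; try lia; discriminate. Qed.

Lemma X_pWF : pWF X.
Proof.
  split; [split; [split; [|split]|split; [|split; [|split]]]|split].
  - intros x. destruct x as [|[|[|[|x]]]]; simpl; intros [A B]; discriminate.
  - exists 4. apply X_node.
  - intros x y. destruct x as [|[|[|[|x]]]]; destruct y as [|[|[|[|y]]]]; simpl;
    intros H; try discriminate; auto.
  - exists 0; reflexivity.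
  - exists 2; reflexivity.
  - intros x Hx. exists 0. split; [reflexivity|]. apply X_reach; [lia|apply X_node; auto].
  - intros x Hx. exists 2. split; [reflexivity|]. apply X_reach; [apply X_node; auto|lia].
  - intros x; simpl. destruct x; simpl; auto; discriminate.
  - intros x; simpl. destruct x as [|[|[|x]]]; simpl; auto; discriminate.
Qed.

Lemma X_pOR11 : pOR11 X.
Proof.
  split; [split|split; [|split]].
  - left; apply X_pWF.
  - intros t Ht. destruct t as [|[|[|[|t]]]]; simpl in Ht; try discriminate.
    + split; right; split; auto.
      * exists 0. split; auto. intros z; destruct z as [|[|[|[|z]]]]; simpl; auto; discriminate.
      * exists 2. split; auto. intros z; destruct z as [|[|[|[|z]]]]; simpl; auto; discriminate.
    + split; right; split; auto.
      * exists 2. split; auto. intros z; destruct z as [|[|[|[|z]]]]; simpl; auto; discriminate.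
      * exists 0. split; auto. intros z; destruct z as [|[|[|[|z]]]]; simpl; auto; discriminate.
  - apply X_pWF.
  - exists 0. split; auto. intros j; simpl; intro H; apply Nat.eqb_eq in H; auto.
  - exists 2. split; auto. intros j; simpl; intro H; apply Nat.eqb_eq in H; auto.
Qed.

Lemma X_not : ~ SC class_small X.
Proof.
  intros H. destruct (SC_inv X H) as [_ [_ [_ D]]].
  pose proof (D 0 eq_refl eq_refl 3). simpl in H0. discriminate.
Qed.

Theorem mainTheorem3 :
  (forall N, SC class_small N -> SC class_big N) /\
  (exists N, SC class_big N /\ ~ SC class_small N) /\
  (exists N, pOR11 N /\ ~ SC class_small N).
Proof.
  split; [exact SC_mono|split].
  - exists X. split; [apply SC_base; right; right; left; apply X_pOR11|apply X_not].
  - exists X. split; [apply X_pOR11|apply X_not].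
Qed.
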